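(* Let $a\geq 3$ and $m\geq 1$ be integers. There is a bijective correspondence between right $0$-pyramids of pieces of length $a$ and of size $m$, and positive $(am,m)$-strings.
   Context: A string is a finite sequence of $0$'s and $1$'s; an $(n,m)$-string is a string of length $n$ with exactly $m$ $1$'s. An $(am,m)$-string $x_1\dots x_{am}$ is positive if $t_s=\sum_{u=1}^s(a\,x_u-1)\geq 0$ for all $s=1,\dots,am$. A piece is an open interval $]s,s+a[$ with $s\in\mathbb Z$; two pieces are concurrent iff their intervals intersect. A heap is a finite configuration obtained by successively dropping pieces vertically towards the horizontal axis, each coming to rest on the axis or on top of the highest previously placed piece whose interval meets its own; configurations (not dropping orders) are counted. A pyramid is a heap with a unique bottom piece (exactly one piece on the axis); its size is its number of pieces. A right $0$-pyramid is a pyramid whose bottom piece covers $]0,a[$ and is a leftmost piece (no piece covers $]t,t+a[$ with $t<0$). *)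

(* Defs.v *)
From HB Require Import structures.
From mathcomp Require Import all_boot all_order all_algebra.
From mathcomp Require Import finmap.
Set Implicit Arguments. Unset Strict Implicit. Unset Printing Implicit Defensive.
Import Order.TTheory GRing.Theory Num.Theory.

(* A piece of length a is the open interval ]s, s+a[ with s : int.
   A placed piece is a pair (s, h) : int * nat, h being its level (0 = on the axis). *)

(* ]s,s+a[ and ]t,t+a[ intersect iff |s - t| < a *)
Definition concurrent (a : nat) (s t : int) : bool := (`|s - t| < a)%N.

Definition drop_level (a : nat) (H : seq (int * nat)) (s : int) : nat :=
  \max_(p <- H | concurrent a p.1 s) p.2.+1.

Fixpoint build_aux (a : nat) (H : seq (int * nat)) (ss : seq int) : seq (int * nat) :=
  match ss with
  | [::] => H
  | s :: ss' => build_aux a (rcons H (s, drop_level a H s)) ss'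
  end.
Definition build (a : nat) (ss : seq int) := build_aux a [::] ss.

Local Open Scope fset_scope.

(* A heap is a configuration (set of placed pieces) obtainable by dropping;
   configurations, not dropping orders, are what is counted. *)
Definition is_heap (a : nat) (H : {fset (int * nat)}) : Prop :=
  exists ss : seq int, uniq (build a ss) /\ H = [fset p | p in build a ss].

Definition is_pyramid (a : nat) (H : {fset (int * nat)}) : Prop :=
  is_heap a H /\ #|` [fset p in H | p.2 == 0%N]| = 1%N.

Definition right0_pyramid (a m : nat) (H : {fset (int * nat)}) : Prop :=
  [/\ is_pyramid a H, ((0:int), 0%N) \in H, (forall p, p \in H -> 0 <= p.1)%R
    & #|` H| = m].

(* t_s = sum_{u=1}^s (a x_u - 1) for the string x (indices shifted to 0-based) *)
Definition tpart (a : nat) (x : seq bool) (s : nat) : int :=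
  (\sum_(u < s) ((a%:Z) * (nth false x u)%:Z - 1))%R.

Definition positive_string (a m : nat) (x : seq bool) : Prop :=
  [/\ size x = (a * m)%N, count id x = m
    & forall s, (1 <= s <= a * m)%N -> (0 <= tpart a x s)%R].

(* Main.v *)
Require Import Defs.
From mathcomp Require Import all_boot all_order all_algebra finmap zify.
From Stdlib Require Import ClassicalEpsilon ProofIrrelevance.
Import Order.TTheory GRing.Theory Num.Theory.
Set Implicit Arguments. Unset Strict Implicit. Unset Printing Implicit Defensive.

Module MP1.

Lemma memF (L : seq (int*nat)) x : (x \in [fset p | p in L]%fset) = (x \in L).
Proof. by apply/imfsetP/idP => [[y Hy ->]|H]; [ | exists x]. Qed.

Lemma cardF (L : seq (int*nat)) : uniq L -> #|` [fset p | p in L]%fset| = size L.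
Proof.
move=> u; rewrite card_in_imfset //=; by rewrite undup_id.
Qed.

Section Heap.
Variable a : nat.
Hypothesis a0 : (0 < a)%N.

Lemma conc_sym s t : concurrent a s t = concurrent a t s.
Proof. by rewrite /concurrent distnC. Qed.

Lemma conc_refl s : concurrent a s s.
Proof. by rewrite /concurrent subrr. Qed.

Lemma dl_gt L s p : p \in L -> concurrent a p.1 s -> (p.2 < drop_level a L s)%N.
Proof. move=> pL c; exact: (leq_bigmax_seq (F := fun p : int * nat => p.2.+1)). Qed.

Lemma dl_eq L1 L2 s : L1 =i L2 -> drop_level a L1 s = drop_level a L2 s.
Proof. move=> e; apply: eq_big_idem => //; exact: maxnn. Qed.

Lemma dl_nil s : drop_level a [::] s = 0%N.
Proof. by rewrite /drop_level big_nil. Qed.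

Lemma build_aux_rcons H ss s :
  build_aux a H (rcons ss s) =
  rcons (build_aux a H ss) (s, drop_level a (build_aux a H ss) s).
Proof. by elim: ss H => [|x ss IH] H //=. Qed.

Lemma build_rcons ss s :
  build a (rcons ss s) = rcons (build a ss) (s, drop_level a (build a ss) s).
Proof. exact: build_aux_rcons. Qed.

Lemma build_aux_cat H u w : build_aux a H (u ++ w) = build_aux a (build_aux a H u) w.
Proof. by elim: u H => [|x u IH] H //=. Qed.

Lemma build_aux_sub H w x : x \in H -> x \in build_aux a H w.
Proof.
elim: w H => [|y w IH] H //= xH; apply: IH; by rewrite mem_rcons inE xH orbT.
Qed.

Lemma build_cat_sub u w x : x \in build a u -> x \in build a (u ++ w).
Proof. by rewrite /build build_aux_cat; apply: build_aux_sub. Qed.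

Lemma build_aux_eqi H1 H2 w : H1 =i H2 -> build_aux a H1 w =i build_aux a H2 w.
Proof.
elim: w H1 H2 => [|y w IH] H1 H2 //= e; apply: IH => z.
by rewrite !mem_rcons !inE (dl_eq _ e) e.
Qed.

Lemma map_build ss : map fst (build a ss) = ss.
Proof.
elim/last_ind: ss => [|ss s IH] //; by rewrite build_rcons map_rcons IH.
Qed.

Lemma build_uniq ss : uniq (build a ss).
Proof.
elim/last_ind: ss => [|ss s IH] //; rewrite build_rcons rcons_uniq IH andbT.
apply/negP => H; have := dl_gt H (conc_refl s); by rewrite ltnn.
Qed.

Lemma size_build ss : size (build a ss) = size ss.
Proof. by rewrite -{2}(map_build ss) size_map. Qed.

Lemma mem_build ss q : q \in build a ss ->
  exists u0 v, ss = u0 ++ q.1 :: v /\ q.2 = drop_level a (build a u0) q.1.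
Proof.
elim/last_ind: ss => [|ss s IH] //; rewrite build_rcons mem_rcons inE.
case/orP => [/eqP ->|/IH [u0 [v [-> e]]]]; first by exists ss, [::]; rewrite cats1.
by exists u0, (rcons v s); rewrite rcons_cat rcons_cons.
Qed.

Lemma piece_in u x v : (x, drop_level a (build a u) x) \in build a (u ++ x :: v).
Proof. rewrite -cat_rcons; apply: build_cat_sub; by rewrite build_rcons mem_rcons inE eqxx. Qed.

Definition maxp (L : seq (int * nat)) (q : int * nat) :=
  forall r, r \in L -> concurrent a q.1 r.1 -> (r.2 <= q.2)%N.

Definition maxb (L : seq (int * nat)) (q : int * nat) :=
  all (fun r => concurrent a q.1 r.1 ==> (r.2 <= q.2)%N) L.

Lemma maxbP L q : reflect (maxp L q) (maxb L q).
Proof.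
apply: (iffP allP) => H r rL; [move=> c; exact: (implyP (H r rL)) | apply/implyP; exact: H].
Qed.

Lemma maxp_last L s : maxp (rcons L (s, drop_level a L s)) (s, drop_level a L s).
Proof.
move=> r; rewrite mem_rcons inE => /orP [/eqP -> //|rL] c /=.
apply: ltnW; apply: dl_gt => //; by rewrite conc_sym.
Qed.

End Heap.

End MP1.
Import MP1.

Module MP2.

Section Chain.
Variable a : nat.
Hypothesis a0 : (0 < a)%N.

Definition rr (u v : int) : bool := (v <= u + a%:Z - 1)%R.

Lemma sorted_rcons (u : seq int) x : sorted rr (rcons u x) ->
  sorted rr u /\ (forall y, u != [::] -> rr (last y u) x).
Proof.
case: u => [|z u] //= ; rewrite rcons_path => /andP [p l]; split => // y _.
Qed.

Lemma arith1 (x q z : int) : (x <= z + a%:Z - 1)%R -> (z <= q)%R ->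
  (a <= `|q - x|)%N -> (x <= q - a%:Z)%R.
Proof. lia. Qed.

Lemma arith2 (x q z : int) : (x <= z + a%:Z - 1)%R -> (z <= q - a%:Z)%R ->
  (a <= `|q - x|)%N -> (x <= q - a%:Z)%R.
Proof. lia. Qed.

Lemma arith3 (x q : int) : (x + a%:Z - 1 < q)%R -> (`|x - q| < a)%N -> False.
Proof. lia. Qed.

Lemma arith4 (x q : int) : (x + a%:Z - 1 < q)%R -> (q <= x)%R -> False.
Proof. lia. Qed.

Lemma chain_after u0 q1 v :
  sorted rr (u0 ++ q1 :: v) ->
  maxp a (build a (u0 ++ q1 :: v)) (q1, drop_level a (build a u0) q1) ->
  forall x, x \in v -> (x <= q1 - a%:Z)%R.
Proof.
elim/last_ind: v => [|v x IH] //; rewrite -rcons_cons -rcons_cat => srt mx.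
have [srt1 hl] := sorted_rcons srt.
have qin : (q1, drop_level a (build a u0) q1) \in build a (u0 ++ q1 :: v).
  exact: piece_in.
have mx1 : maxp a (build a (u0 ++ q1 :: v)) (q1, drop_level a (build a u0) q1).
  move=> r rin; apply: mx; rewrite build_rcons mem_rcons inE rin orbT //.
have IH' := IH srt1 mx1.
move=> y; rewrite mem_rcons inE => /orP [/eqP ->|]; last exact: IH'.
have nc : ~~ concurrent a q1 x.
  apply/negP => c.
  have xin : (x, drop_level a (build a (u0 ++ q1 :: v)) x) \in build a (rcons (u0 ++ q1 :: v) x).
    by rewrite build_rcons mem_rcons inE eqxx.
  have := mx _ xin c; rewrite /= => le.
  have := dl_gt qin (c : concurrent a (q1, drop_level a (build a u0) q1).1 x).
  by rewrite ltnNge le.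
have := hl q1; rewrite /rr last_cat /= => h.
have {}h : (x <= last q1 v + a%:Z - 1)%R.
  apply: h; by case: u0 {srt mx srt1 hl qin mx1 IH IH'}.
move: nc; rewrite /concurrent.
have := mem_last q1 v; rewrite inE => /orP [/eqP e|lv].
  rewrite e in h; rewrite -leqNgt => nc; exact: (arith1 h (lexx _) nc).
have := IH' _ lv => h2; rewrite -leqNgt => nc; exact: (arith2 h h2 nc).
Qed.

Lemma lastK p s q : sorted rr (rcons p s) -> q \in build a (rcons p s) ->
  q != (s, drop_level a (build a p) s) -> maxp a (build a (rcons p s)) q ->
  (s <= q.1 - a%:Z)%R.
Proof.
move=> srt qin nq mx.
have [u0 [v [e e2]]] := mem_build qin.
case/lastP: v e => [|v y] e.
  move: e; rewrite cats1 => /rcons_inj [ep es]; move: nq.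
  by case: q {qin mx} e2 es => q1 q2 /= -> ->; rewrite ep eqxx.
move: (e); rewrite -rcons_cons -rcons_cat => /rcons_inj [ep es].
rewrite es; rewrite e in srt mx.
apply: (chain_after srt) => //; last by rewrite mem_rcons inE eqxx.
move: mx; case: q {qin nq} e2 e es ep srt => q1 q2 /= -> //.
Qed.

Lemma uniq_chain n ss1 ss2 : size ss1 = n -> sorted rr ss1 -> sorted rr ss2 ->
  build a ss1 =i build a ss2 -> ss1 = ss2.
Proof.
elim: n ss1 ss2 => [|n IH] ss1 ss2.
  move/eqP; rewrite size_eq0 => /eqP -> _ _.
  case/lastP: ss2 => [|p s] // e; have := e (s, drop_level a (build a p) s).
  by rewrite build_rcons mem_rcons inE eqxx.
case/lastP: ss1 => [|p1 s1] //; rewrite size_rcons => -[sz] srt1.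
case/lastP: ss2 => [|p2 s2] srt2 e.
  have := e (s1, drop_level a (build a p1) s1).
  by rewrite build_rcons mem_rcons inE eqxx.
set q1 := (s1, drop_level a (build a p1) s1) in e.
set q2 := (s2, drop_level a (build a p2) s2) in e.
have q1in : q1 \in build a (rcons p1 s1) by rewrite build_rcons mem_rcons inE eqxx.
have q2in : q2 \in build a (rcons p2 s2) by rewrite build_rcons mem_rcons inE eqxx.
have m1 : maxp a (build a (rcons p1 s1)) q1 by rewrite build_rcons; apply: maxp_last.
have m2 : maxp a (build a (rcons p2 s2)) q2 by rewrite build_rcons; apply: maxp_last.
have m1' : maxp a (build a (rcons p2 s2)) q1 by move=> r; rewrite -e; apply: m1.
have m2' : maxp a (build a (rcons p1 s1)) q2 by move=> r; rewrite e; apply: m2.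
have [eq12|ne12] := eqVneq q1 q2.
  have es : s1 = s2 by move: eq12; rewrite /q1 /q2 => -[].
  rewrite -es; congr rcons; apply: IH => //.
  - by have [] := sorted_rcons srt1.
  - by have [] := sorted_rcons srt2.
  move=> x; have u1 := build_uniq a0 (rcons p1 s1); have u2 := build_uniq a0 (rcons p2 s2).
  move: u1 u2; rewrite !build_rcons !rcons_uniq -/q1 -/q2 => /andP [n1 _] /andP [n2 _].
  have := e x; rewrite !build_rcons !mem_rcons !inE -/q1 -/q2 -eq12.
  case: eqP => [->|_] /=; last by [].
  by move=> _; rewrite (negbTE n1) eq12 (negbTE n2).
have q1in2 : q1 \in build a (rcons p2 s2) by rewrite -e.
have q2in1 : q2 \in build a (rcons p1 s1) by rewrite e.
have h1 := lastK srt2 q1in2 ne12 m1'.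
have ne21 : q2 != q1 by rewrite eq_sym.
have h2 := lastK srt1 q2in1 ne21 m2'...
move: h1 h2; rewrite /q1 /q2 /=; lia.
Qed.

Lemma dl_rcons_nc L p s : ~~ concurrent a p.1 s ->
  drop_level a (rcons L p) s = drop_level a L s.
Proof. by move=> nc; rewrite /drop_level big_rcons (negbTE nc) Monoid.mulm1. Qed.

Lemma move_end H w x : (forall y, y \in w -> ~~ concurrent a x y) ->
  build_aux a H (x :: w) =i build_aux a H (rcons w x).
Proof.
elim: w H => [|y w IH] H nc //=.
move=> z; rewrite -(IH (rcons H (y, drop_level a H y))); last first.
  by move=> t tw; apply: nc; rewrite inE tw orbT.
move: z; rewrite /=; apply: build_aux_eqi => z.
have ncy : ~~ concurrent a x y by apply: nc; rewrite inE eqxx.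
rewrite !mem_rcons !inE (@dl_rcons_nc H (x, drop_level a H x) y) //.
rewrite (@dl_rcons_nc H (y, drop_level a H y) x); last by rewrite conc_sym.
by rewrite !mem_rcons !inE orbCA.
Qed.

Lemma ex_min (T : eqType) (l : seq T) (P : pred T) (f : T -> int) :
  (exists2 x, x \in l & P x) ->
  exists x, [/\ x \in l, P x & forall y, y \in l -> P y -> (f x <= f y)%R].
Proof.
elim: l => [|z l IH] [x]; first by [].
rewrite inE => /orP [/eqP ->|xl] Px.
  have [Pl|nPl] := boolP (has P l).
    have [y [yl Py hy]] := IH (elimT hasP Pl).
    case: (lerP (f z) (f y)) => h.
      exists z; split; rewrite ?inE ?eqxx //.
      move=> t; rewrite inE => /orP [/eqP ->//|tl] Pt; apply: le_trans h (hy _ tl Pt).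
    exists y; split; rewrite ?inE ?yl ?orbT //.
    move=> t; rewrite inE => /orP [/eqP ->_|tl Pt]; [exact: ltW | exact: hy].
  exists z; split; rewrite ?inE ?eqxx //.
  move=> t; rewrite inE => /orP [/eqP ->//|tl] Pt.
  by move/hasPn: nPl => /(_ t tl); rewrite Pt.
have [y [yl Py hy]] := IH (ex_intro2 _ _ x xl Px).
case: (boolP (P z)) => Pz.
  case: (lerP (f z) (f y)) => h.
    exists z; split; rewrite ?inE ?eqxx //.
    move=> t; rewrite inE => /orP [/eqP ->//|tl] Pt; apply: le_trans h (hy _ tl Pt).
  exists y; split; rewrite ?inE ?yl ?orbT //.
  move=> t; rewrite inE => /orP [/eqP ->_|tl Pt]; [exact: ltW | exact: hy].
exists y; split; rewrite ?inE ?yl ?orbT //.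
move=> t; rewrite inE => /orP [/eqP ->|tl Pt]; [by rewrite (negbTE Pz) | exact: hy].
Qed.

Lemma sorted_rcons2 (l : seq int) x : sorted rr l ->
  (forall y, l != [::] -> rr (last y l) x) -> sorted rr (rcons l x).
Proof.
case: l => [|z l] //= p h; rewrite rcons_path p /=; exact: h.
Qed.

Lemma exists_chain n ss0 : size ss0 = n ->
  exists ss, sorted rr ss /\ build a ss =i build a ss0.
Proof.
elim: n ss0 => [|n IH] ss0.
  by move/eqP; rewrite size_eq0 => /eqP ->; exists [::].
case/lastP: ss0 => [|p s] //; rewrite size_rcons => -[sz].
set S := build a (rcons p s).
have lin : (s, drop_level a (build a p) s) \in S by rewrite /S build_rcons mem_rcons inE eqxx.
have lmax : maxb a S (s, drop_level a (build a p) s).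
  apply/maxbP; rewrite /S build_rcons; exact: maxp_last.
have [q [qin qmax qmin]] := ex_min (fun q : int * nat => q.1) (l := S) (P := maxb a S) (ex_intro2 (fun x => x \in S) (maxb a S) _ lin lmax).
have [u0 [v [e e2]]] := mem_build qin.
have nc : forall y, y \in v -> ~~ concurrent a q.1 y.
  move=> y yv; move: e; case/splitPr: yv => v1 v2 e; apply/negP => c.
  have pin := piece_in a (u0 ++ q.1 :: v1) y v2.
  have qin' : q \in build a (u0 ++ q.1 :: v1).
    by case: q {qin qmax qmin c pin} e e2 => q1 q2 /= _ ->; apply: piece_in.
  have := dl_gt qin' c.
  rewrite -catA cat_cons -e -/S in pin.
  by rewrite ltnNge (maxbP _ _ _ qmax _ pin c).
have eS : S =i build a (rcons (u0 ++ v) q.1).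
  move=> z; rewrite /S e /build build_aux_cat -cats1 -catA cats1 build_aux_cat.
  exact: move_end.
have [ss' [srt' e']] : exists ss, sorted rr ss /\ build a ss =i build a (u0 ++ v).
  apply: IH; have := f_equal size e; rewrite size_rcons sz size_cat /= size_cat; lia.
have eB : build a (rcons ss' q.1) =i S.
  by move=> z; rewrite eS !build_rcons !mem_rcons !inE (dl_eq _ _ e') e'.
exists (rcons ss' q.1); split => //.
apply: sorted_rcons2 => // y.
case/lastP: ss' srt' e' eB => [|p' s'] // srt' e' eB _.
rewrite last_rcons /rr leNgt; apply/negP => h.
set q' := (s', drop_level a (build a p') s').
have q'in : q' \in build a (rcons p' s') by rewrite build_rcons mem_rcons inE eqxx.
have q'S : q' \in S by rewrite -eB build_rcons mem_rcons inE q'in orbT.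
have q'max : maxb a S q'.
  apply/maxbP => r; rewrite -eB build_rcons mem_rcons inE => /orP [/eqP ->|rin] c.
    by move: c; rewrite /concurrent /q' /= => c; case: (arith3 h c).
  by move: rin c; rewrite build_rcons; apply: maxp_last.
have := qmin _ q'S q'max; rewrite /q' /= => h2; exact: (arith4 h h2).
Qed.
End Chain.

End MP2.
Import MP2.

Module MP3.
Local Open Scope ring_scope.

Section Str.
Variable a : nat.
Hypothesis a0 : (0 < a)%N.

Definition stp (b : bool) : int := a%:Z * b%:Z - 1.

Fixpoint hts (t : int) (x : seq bool) : seq int :=
  match x with
  | [::] => [::]
  | b :: x' => if b then t :: hts (t + stp b) x' else hts (t + stp b) x'
  end.

Fixpoint posr (t : int) (x : seq bool) : bool :=
  match x with
  | [::] => true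
  | b :: x' => (0 <= t + stp b) && posr (t + stp b) x'
  end.

Lemma tpart0 x : tpart a x 0 = 0.
Proof. by rewrite /tpart big_ord0. Qed.

Lemma tpart_cons b x s : tpart a (b :: x) s.+1 = stp b + tpart a x s.
Proof. by rewrite /tpart big_ord_recl. Qed.

Lemma posrP t x : reflect (forall s, (1 <= s <= size x)%N -> 0 <= t + tpart a x s) (posr t x).
Proof.
elim: x t => [|b x IH] t /=.
  by apply: ReflectT => s; rewrite ltnNge; case: s.
apply: (iffP andP) => [[h1 /IH h2] [|s] //= hs|H].
  rewrite tpart_cons addrA; case: s hs => [|s] hs; first by rewrite tpart0 addr0.
  exact: h2.
split.
  by have := H 1%N isT; rewrite tpart_cons tpart0 addr0.
apply/IH => s hs; have := H s.+1; rewrite tpart_cons addrA; apply; move: hs; case: s => //.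
Qed.

Lemma positiveP m x : positive_string a m x <->
  [/\ size x = (a * m)%N, count id x = m & posr 0 x].
Proof.
split => [[h1 h2 h3]|[h1 h2 /posrP h3]]; split => //.
  apply/posrP => s hs; rewrite add0r; apply: h3; by rewrite -h1.
move=> s hs; rewrite -(add0r (tpart a x s)); apply: h3; by rewrite h1.
Qed.

Lemma size_hts t x : size (hts t x) = count id x.
Proof. by elim: x t => [|[] x IH] t //=; rewrite IH. Qed.

Lemma hts_head t x s l : hts t x = s :: l -> s <= t.
Proof.
elim: x t => [|[] x IH] t //=; first by case=> ->.
move/IH; rewrite /stp mulr0 add0r => h; apply: le_trans h _; lia.
Qed.

Lemma hts_inj t x y : size x = size y -> hts t x = hts t y -> x = y.
Proof.
elim: x t y => [|b x IH] t [|c y] //= [sz].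
case: b; case: c => e.
- by case: e => e; rewrite (IH _ _ sz e).
- have h := hts_head (esym e); move: h; rewrite /stp mulr0 add0r; lia.
- have h := hts_head e; move: h; rewrite /stp mulr0 add0r; lia.
- by rewrite (IH _ _ sz e).
Qed.


Lemma stp_true : stp true = a%:Z - 1. Proof. by rewrite /stp mulr1. Qed.
Lemma stp_false : stp false = - 1. Proof. by rewrite /stp mulr0 add0r. Qed.

Lemma hts_nonneg t x : 0 <= t -> posr t x -> all (fun s => 0 <= s) (hts t x).
Proof.
elim: x t => [|b x IH] t //= t0 /andP [h1 h2].
case: b h1 h2 => h1 h2 /=; last exact: IH.
by rewrite t0 /=; apply: IH.
Qed.

Lemma path_mono (u u' : int) l : u <= u' -> path (rr a) u l -> path (rr a) u' l.
Proof.
case: l => [|z l] //= h /andP [h1 h2]; rewrite h2 andbT; move: h1; rewrite /rr; lia.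
Qed.

Lemma hts_path t x : path (rr a) (t - a%:Z + 1) (hts t x).
Proof.
elim: x t => [|b x IH] t //=; case: b.
  rewrite /= {1}/rr; apply/andP; split; first by lia.
  have := IH (t + stp true); apply: path_mono; rewrite stp_true; lia.
have := IH (t + stp false); apply: path_mono; rewrite stp_false; lia.
Qed.

Lemma hts_nseq t n y : hts t (nseq n false ++ y) = hts (t - n%:Z) y.
Proof.
elim: n t => [|n IH] t /=; first by rewrite subr0.
rewrite IH stp_false; congr hts; lia.
Qed.

Lemma posr_nseq t n y : 0 <= t - n%:Z ->
  posr t (nseq n false ++ y) = posr (t - n%:Z) y.
Proof.
elim: n t => [|n IH] t /= h; first by rewrite subr0.
rewrite stp_false IH; last by lia.
have -> : t - 1 - n%:Z = t - n.+1%:Z by lia.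
have -> : 0 <= t - 1 by lia.
by [].
Qed.

Fixpoint mk (t : int) (ss : seq int) : seq bool :=
  match ss with
  | [::] => nseq `|t|%N false
  | s :: ss' => nseq `|t - s|%N false ++ true :: mk (s + a%:Z - 1) ss'
  end.

Definition okm (t : int) (ss : seq int) :=
  [&& 0 <= t, path (rr a) (t - a%:Z + 1) ss & all (fun s => 0 <= s) ss].

Lemma okm_cons t s ss : okm t (s :: ss) -> okm (s + a%:Z - 1) ss /\ s <= t /\ 0 <= s.
Proof.
rewrite /okm /= => /and4P [h1 /andP [h2 h3] h4 h5].
have -> : s + a%:Z - 1 - a%:Z + 1 = s by lia.
rewrite h3 h5 andbT; move: h2; rewrite /rr; split; [lia | split; lia].
Qed.

Lemma hts_mk t ss : okm t ss -> hts t (mk t ss) = ss.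
Proof.
elim: ss t => [|s ss IH] t /=.
  move=> _; rewrite -(cats0 (nseq _ _)) hts_nseq //.
move/okm_cons => [ok [st s0]].
rewrite hts_nseq /=.
have -> : t - `|t - s|%N%:Z = s by lia.
by rewrite stp_true addrA IH.
Qed.

Lemma posr_mk t ss : okm t ss -> posr t (mk t ss).
Proof.
elim: ss t => [|s ss IH] t /=.
  move=> /and3P [t0 _ _]; rewrite -(cats0 (nseq _ _)) posr_nseq //; lia.
move/okm_cons => [ok [st s0]].
rewrite posr_nseq; last by lia.
have -> : t - `|t - s|%N%:Z = s by lia.
rewrite /= stp_true addrA IH // andbT; lia.
Qed.

Lemma count_mk t ss : count id (mk t ss) = size ss.
Proof.
elim: ss t => [|s ss IH] t /=; first by rewrite count_nseq mul0n.
by rewrite count_cat count_nseq mul0n /= IH.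
Qed.

Lemma size_mk t ss : okm t ss -> (size (mk t ss))%:Z = t + a%:Z * (size ss)%:Z.
Proof.
elim: ss t => [|s ss IH] t /=.
  move=> /and3P [t0 _ _]; rewrite size_nseq; lia.
move/okm_cons => [ok [st s0]].
rewrite size_cat size_nseq /= (_ : (`|t - s|%N + (size (mk (s + a%:Z - 1) ss)).+1)%N%:Z
   = `|t - s|%N%:Z + 1 + (size (mk (s + a%:Z - 1) ss))%:Z); last by lia.
rewrite IH //; lia.
Qed.

End Str.

End MP3.
Import MP3.

Module MP4.
Local Open Scope ring_scope.

Section Lev.
Variable a : nat.
Hypothesis a0 : (0 < a)%N.

Lemma cover (w : seq int) : path (rr a) 0 w -> all (fun s => 0 <= s) w ->
  forall c, 0 <= c -> c <= last 0 w + a%:Z - 1 ->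
  exists2 y, y \in 0 :: w & concurrent a y c.
Proof.
elim/last_ind: w => [|w z IH] /=.
  move=> _ _ c c0 c1; exists 0; rewrite ?inE //; rewrite /concurrent; lia.
rewrite rcons_path all_rcons last_rcons => /andP [p r] /andP [z0 al] c c0 c1.
have [zc|cz] := lerP z c.
  exists z; first by rewrite inE mem_rcons inE eqxx orbT.
  rewrite /concurrent; lia.
have c2 : c <= last 0 w + a%:Z - 1 by move: r cz; rewrite /rr; move: (last 0 w) => l; lia.
have [y yin cy] := IH p al c c0 c2.
exists y => //; move: yin; rewrite !inE mem_rcons inE => /orP [->//|->]; by rewrite !orbT.
Qed.

Lemma level_pos (w : seq int) p : path (rr a) 0 w -> all (fun s => 0 <= s) w ->
  p \in build a (0 :: w) -> p = (0, 0%N) \/ (0 < p.2)%N.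
Proof.
move=> pw nw /mem_build [u0 [v [e e2]]].
case: u0 e e2 => [|z u1] /=.
  case=> e1 _; left; rewrite -e1 in e2; rewrite dl_nil in e2.
  by case: p e1 e2 => p1 p2 /= <- ->.
case=> <- ew e2; right.
move: pw nw; rewrite ew cat_path all_cat /= => /and3P [pu r _] /andP [nu /andP [p0 _]].
have [y yin cy] := cover pu nu p0 r.
have : y \in map fst (build a (0 :: u1)) by rewrite map_build.
case/mapP => q qin yq.
rewrite e2; apply: (leq_ltn_trans (leq0n q.2)); apply: dl_gt qin _; by rewrite -yq.
Qed.

End Lev.

End MP4.
Import MP4.

Module MP5.
Local Open Scope ring_scope.

Definition Fs (L : seq (int * nat)) : {fset (int * nat)} := [fset p | p in L]%fset.

Section Main.
Variables a m : nat.
Hypothesis ha : (3 <= a)%N.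
Hypothesis hm : (1 <= m)%N.
Let a0 : (0 < a)%N. Proof. by apply: leq_trans ha. Qed.

Lemma first_piece (w : seq int) : ((0:int), 0%N) \in build a (0 :: w).
Proof. rewrite /build /= dl_nil; apply: build_aux_sub; by rewrite inE. Qed.

Lemma card1_eq (A : {fset (int * nat)}) x y : #|` A| = 1%N -> x \in A -> y \in A -> x = y.
Proof.
move/eqP/cardfs1P => [z ->]; rewrite !inE => /eqP -> /eqP -> //.
Qed.

Lemma good_pyr (w : seq int) : path (rr a) 0 w -> all (fun s => (0 <= s)%R) w ->
  size w = m.-1 -> right0_pyramid a m (Fs (build a (0 :: w))).
Proof.
move=> pw nw sw; split.
- split; first by exists (0 :: w); split => //; exact: build_uniq.
  have -> : [fset p in Fs (build a (0 :: w)) | p.2 == 0%N]%fset = [fset ((0:int), 0%N)]%fset.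
    apply/fsetP => z; rewrite !inE /Fs.
    have -> : in_mem z (mem_fin (fin_finpred (build a (0 :: w)))) = (z \in build a (0 :: w)) by [].
    rewrite eqE /=.
    apply/andP/eqP => [[zin z0]|->]; last by rewrite first_piece.
    have [//|] := level_pos a0 pw nw zin; by rewrite (eqP z0).
  exact: cardfs1.
- by rewrite memF first_piece.
- move=> p; rewrite memF => pin.
  have : p.1 \in map fst (build a (0 :: w)) by apply: map_f.
  rewrite map_build inE => /orP [/eqP ->//|]; by move/(allP nw).
- rewrite cardF ?build_uniq // size_build /= sw; by case: m hm.
Qed.

Lemma g_ok x : positive_string a m x -> right0_pyramid a m (Fs (build a (hts a 0 x))).
Proof.
move/positiveP => [sz ct po].
case: x sz ct po => [|b x] sz ct po.
  have h : (0 < a * m)%N by rewrite muln_gt0 a0 hm.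
  by rewrite -sz in h.
case: b sz ct po => sz ct po; last by move: po; rewrite /= stp_false.
have hp := hts_path a0 0 (true :: x).
have hn := hts_nonneg (lexx 0%R) po.
move: hp hn; rewrite /= add0r => /andP [_ hp] hn.
rewrite /=; apply: good_pyr.
- exact: hp.
- exact: hn.
- by rewrite size_hts -ct.
Qed.

Definition PS := {x : seq bool | positive_string a m x}.
Definition PY := {H : {fset (int * nat)} | right0_pyramid a m H}.

Definition g (x : PS) : PY := exist _ _ (g_ok (proj2_sig x)).

Lemma sorted_hts x : positive_string a m x -> sorted (rr a) (hts a 0 x).
Proof.
move=> _; have := hts_path a0 0 x; case: (hts a 0 x) => //= z l /andP [_ h]; exact: h.
Qed.

Lemma g_inj : injective g.
Proof.
move=> [x px] [y py] e.
have e1 : Fs (build a (hts a 0 x)) = Fs (build a (hts a 0 y)) := f_equal (@proj1_sig _ _) e.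
have ei : build a (hts a 0 x) =i build a (hts a 0 y).
  by move=> z; have := f_equal (fun S => z \in S) e1; rewrite /Fs !memF.
have eh := uniq_chain a0 erefl (sorted_hts px) (sorted_hts py) ei.
have sxy : size x = size y by case: (px) => -> _ _; case: (py) => -> _ _.
have exy : x = y := hts_inj a0 sxy eh.
subst y; congr exist; exact: proof_irrelevance.
Qed.

Lemma g_surj (Y : PY) : exists X, g X = Y.
Proof.
case: Y => H pH; have pH0 := pH; case: pH0 => [[[ss0 [u0 eH]] c1] h00 hpos hcard].
have [ss [srt e]] := exists_chain a0 erefl (ss0 := ss0).
have eH' : H = Fs (build a ss).
  by rewrite eH; apply/fsetP => z; rewrite /Fs !memF e.
have sz : size ss = m by rewrite -hcard eH' cardF ?build_uniq // size_build.
case: ss srt e eH' sz => [|s0 w] srt e eH' sz; first by have h := hm; rewrite -sz in h.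
have s00 : s0 = 0.
  have f1 : (s0, 0%N) \in build a (s0 :: w).
    rewrite /build /= dl_nil; apply: build_aux_sub; by rewrite inE.
  have := card1_eq (x := (s0, 0%N)) (y := ((0:int), 0%N)) c1.
  have m1 : (s0, 0%N) \in H by rewrite eH' /Fs memF.
  rewrite !inE m1 h00 /= => /(_ isT isT); by case.
subst s0.
have nw : all (fun s => (0 <= s)%R) w.
  apply/allP => s sw.
  have : s \in map fst (build a (0 :: w)) by rewrite map_build inE sw orbT.
  case/mapP => p pin ->; apply: hpos; by rewrite eH' memF.
have ok : okm a 0 (0 :: w).
  rewrite /okm /= nw andbT; apply/andP; split; [rewrite /rr; lia | exact: srt].
have px : positive_string a m (mk a 0 (0 :: w)).
  apply/positiveP; split.
  - have := size_mk a0 ok; rewrite sz; move: (size _) => n; lia.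
  - by rewrite count_mk sz.
  - exact: (posr_mk a0).
exists (exist _ _ px); rewrite /g.
have e2 : Fs (build a (hts a 0 (mk a 0 (0 :: w)))) = H by rewrite (hts_mk a0).
move: (g_ok _); rewrite /= e2 => pf; f_equal; apply: proof_irrelevance.
Qed.

Lemma main_bij : exists f : PY -> PS, bijective f.
Proof.
pose f (Y : PY) : PS := proj1_sig (constructive_indefinite_description _ (g_surj Y)).
have fK : forall Y, g (f Y) = Y.
  move=> Y; exact: (proj2_sig (constructive_indefinite_description _ (g_surj Y))).
exists f; apply: (Bijective (g := g)) => // X; apply: g_inj; by rewrite fK.
Qed.

End Main.


End MP5.
Import MP5.

Theorem lemma5 (a m : nat) (ha : (3 <= a)%N) (hm : (1 <= m)%N) :
  exists f : {H : {fset (int * nat)} | right0_pyramid a m H} ->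
             {x : seq bool | positive_string a m x},
    bijective f.
Proof. exact: main_bij. Qed.
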